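(* Every morphism $f\colon[n]\to[m]$ of $\mathcal{I}\Gamma(as)$ can be written uniquely as $f=a\circ h$ with $h\in H_{n+1}^{+}$ and $a\colon[n]\to[m]$ a morphism of the subcategory $\mathcal{R}\cong\Delta R^{op}$. That is, $\mathcal{I}\Gamma(as)=\Delta R^{op}\circ\mathbf{H}^{+}$.
   Context: Let $C_2=\{1,t\}$ and $[n]=\{0,\dots,n\}$. The category $\mathcal{IF}(as)$ has objects $[n]$; a morphism $f\colon[n]\to[m]$ is a map of sets with a total order on each fibre $f^{-1}(i)$ and a label in $C_2$ on each element of $[n]$ (written $j^\alpha$). For $S=\{j_1^{\alpha_1}<\cdots<j_r^{\alpha_r}\}$ put $1\ast S=S$, $t\ast S=\{j_r^{t\alpha_r}<\cdots<j_1^{t\alpha_1}\}$; the composite of $f\colon[n]\to[m]$, $g\colon[m]\to[p]$ has underlying map $g\circ f$ and fibres $(g\circ f)^{-1}(i)=\coprod_{j^\alpha\in g^{-1}(i)}\alpha\ast f^{-1}(j)$ (ordered disjoint union). $\mathcal{I}\Gamma(as)$ is the subcategory of morphisms with $f(0)=0$. $H_{n+1}$ is the automorphism group of $[n]$ in $\mathcal{IF}(as)$, and $H_{n+1}^{+}$ the subgroup of automorphisms fixing $0$ whose label on $0$ is $1$; $\mathbf{H}^+$ is the corresponding groupoid. Morphisms of $\mathcal{I}\Gamma(as)$ (all labels $1$ unless stated): for $n\geqslant1$ and $0\leqslant i\leqslant n-1$, $d_i\colon[n]\to[n-1]$ sends $j\mapsto j$ ($j\leqslant i$), $j\mapsto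 j-1$ ($j>i$), with fibre over $i$ equal to $\{i<i+1\}$; $d_n\colon[n]\to[n-1]$ sends $j\mapsto j$ ($j<n$), $n\mapsto0$, with fibre over $0$ equal to $\{n<0\}$; for $0\leqslant j\leqslant n$, $s_j\colon[n]\to[n+1]$ sends $k\mapsto k$ ($k\leqslant j$), $k\mapsto k+1$ ($k>j$), so the fibre over $j+1$ is empty; $\rho_n\colon[n]\to[n]$ sends $0\mapsto 0$ and $k\mapsto n+1-k$ for $1\leqslant k\leqslant n$, with all labels equal to $t$. $\mathcal{R}$ denotes the subcategory of $\mathcal{I}\Gamma(as)$ generated by all $d_i$, $s_j$, $\rho_n$; it is isomorphic to $\Delta R^{op}$, the opposite of the reflexive crossed simplicial group category. *)

(* Defs.v *)
From mathcomp Require Import all_boot.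
Set Implicit Arguments. Unset Strict Implicit. Unset Printing Implicit Defensive.

(* A morphism [n] -> [m] of IF(as), where [n] = {0,...,n} is 'I_n.+1.
   fib i  : the fibre over i, listed in increasing order (the total order);
   lab k  : the label of k in C_2 = {1,t}, with false = 1 and true = t. *)
Record mor (n m : nat) := Mor {
  fib : {ffun 'I_m.+1 -> seq 'I_n.+1};
  lab : {ffun 'I_n.+1 -> bool} }.

Definition valid n m (f : mor n m) : bool :=
  perm_eq (flatten [seq fib f i | i <- enum 'I_m.+1]) (enum 'I_n.+1).

Definition fmap n m (f : mor n m) (k : 'I_n.+1) : 'I_m.+1 :=
  odflt ord0 [pick i | k \in fib f i].

Definition actseq n (a : bool) (s : seq 'I_n.+1) := if a then rev s else s.

Definition mcomp n m p (g : mor m p) (f : mor n m) : mor n p :=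
  Mor [ffun i => flatten [seq actseq (lab g j) (fib f j) | j <- fib g i]]
      [ffun k => lab f k (+) lab g (fmap f k)].

Definition idm n : mor n n := Mor [ffun i => [:: i]] [ffun _ => false].

Definition inIGamma n m (f : mor n m) : Prop := valid f /\ ord0 \in fib f ord0.

Definition is_auto n (h : mor n n) : Prop :=
  valid h /\ exists h' : mor n n, valid h' /\ mcomp h h' = idm n /\ mcomp h' h = idm n.

Definition inHplus n (h : mor n n) : Prop :=
  is_auto h /\ ord0 \in fib h ord0 /\ lab h ord0 = false.

(* d_i : [n+1] -> [n], 0 <= i <= n+1 (for i = n+1 the special face). *)
Definition dmor n (i : nat) : mor n.+1 n :=
  Mor [ffun k : 'I_n.+1 => map inord
        (if i <= n then
           (if k < i then [:: val k] else if val k == i then [:: i; i.+1]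
            else [:: (val k).+1])
         else (if val k == 0 then [:: n.+1; 0] else [:: val k]))]
      [ffun _ => false].

Definition smor n (j : nat) : mor n n.+1 :=
  Mor [ffun k : 'I_n.+2 => map inord
        (if k <= j then [:: val k] else if val k == j.+1 then [::]
         else [:: (val k).-1])]
      [ffun _ => false].

Definition rhomor n : mor n n :=
  Mor [ffun k : 'I_n.+1 => map inord
        (if val k == 0 then [:: 0] else [:: n.+1 - val k])]
      [ffun _ => true].

(* The subcategory R generated by all d_i, s_j, rho_n (closure of the
   identities under post-composition with generators). *)
Inductive inR : forall n m, mor n m -> Prop :=
| inR_id n : inR (idm n)
| inR_d n m (a : mor n m.+1) (i : nat) :
    i <= m.+1 -> inR a -> inR (mcomp (dmor m i) a)
| inR_s n m (a : mor n m) (j : nat) :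
    j <= m -> inR a -> inR (mcomp (smor m j) a)
| inR_rho n m (a : mor n m) : inR a -> inR (mcomp (rhomor m) a).

(* Main.v *)
Require Import Defs.
From mathcomp Require Import all_boot.
From mathcomp Require Import zify.
Set Implicit Arguments. Unset Strict Implicit. Unset Printing Implicit Defensive.

Definition nf n m (a : mor n m) (k : nat) : seq nat := map val (fib a (inord k)).
Definition Fo n m (a : mor n m) := flatten [seq fib a i | i <- enum 'I_m.+1].
Definition Fn n m (a : mor n m) := flatten [seq nf a k | k <- iota 0 m.+1].

Lemma Fn_Fo n m (a : mor n m) : Fn a = map val (Fo a).
Proof.
rewrite /Fn /Fo map_flatten -val_enum_ord -!map_comp.
congr flatten; apply: eq_map => i /=. by rewrite /nf inord_val.
Qed.

Lemma mor_ext n m (a b : mor n m) : fib a = fib b -> lab a = lab b -> a = b.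
Proof. by case: a => ??; case: b => ?? /= -> ->. Qed.

Lemma mor_eqnf n m (a b : mor n m) :
  (forall k, k <= m -> nf a k = nf b k) -> (forall x, lab a x = lab b x) -> a = b.
Proof.
move=> H1 H2; apply: mor_ext; apply/ffunP => i; last exact: H2.
apply: (inj_map val_inj); have := H1 i (leq_ord i); by rewrite /nf inord_val.
Qed.

Definition mkmor n m (G : nat -> seq nat) (c : bool) : mor n m :=
  Mor [ffun k : 'I_m.+1 => map (@inord n) (G k)] [ffun _ => c].

Lemma nf_mkmor n m G c k : k <= m -> (forall x, x \in G k -> x <= n) ->
  nf (mkmor n m G c) k = G k.
Proof.
move=> km Hx; rewrite /nf /= ffunE inordK // -map_comp map_id_in // => x /Hx xn /=.
by rewrite inordK.
Qed.

Lemma lab_mkmor n m G c x : lab (mkmor n m G c) x = c.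
Proof. by rewrite /= ffunE. Qed.

Lemma nf_lt n m (a : mor n m) k x : x \in nf a k -> x <= n.
Proof. by case/mapP => y _ ->; exact: leq_ord. Qed.

Definition ac T (c : bool) (s : seq T) := if c then rev s else s.

Lemma nf_comp n p q (g : mor p q) (a : mor n p) c Lg k :
  (forall j, lab g j = c) -> fib g (inord k) = map inord Lg ->
  nf (mcomp g a) k = flatten [seq ac c (nf a j) | j <- Lg].
Proof.
move=> Hl Hf; rewrite /nf /mcomp /= ffunE Hf map_flatten -!map_comp.
congr flatten; apply: eq_map => j /=; rewrite Hl /actseq /ac; case: (c) => //.
by rewrite map_rev.
Qed.

Lemma lab_comp n p q (g : mor p q) (a : mor n p) c x :
  (forall j, lab g j = c) -> lab (mcomp g a) x = lab a x (+) c.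
Proof. by move=> Hl; rewrite /= ffunE Hl. Qed.

Lemma iota_split i m : i <= m -> iota 0 m.+1 = iota 0 i ++ i :: iota i.+1 (m - i).
Proof.
move=> im; rewrite -[m.+1](subnKC (ltnW (leq_ltn_trans im (ltnSn m)))) iotaD.
by rewrite subSn.
Qed.

Lemma flat1 (f : nat -> nat) s : flatten [seq [:: f x] | x <- s] = map f s.
Proof. exact: flatten_map1. Qed.

Lemma flat_in (F G : nat -> seq nat) s : {in s, F =1 G} ->
  flatten (map F s) = flatten (map G s).
Proof. by move=> H; congr flatten; apply/eq_in_map. Qed.

Lemma iota_succ a b : map succn (iota a b) = iota a.+1 b.
Proof. by rewrite -(iotaDl 1). Qed.

Lemma I_d i m : i <= m ->
  flatten [seq (if k < i then [:: k] else if k == i then [:: i; i.+1] else [:: k.+1])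
          | k <- iota 0 m.+1] = iota 0 m.+2.
Proof.
move=> im; rewrite (iota_split im) map_cat flatten_cat [map _ (_ :: _)]/= ltnn eqxx.
rewrite (@flat_in _ (fun k => [:: k]) (iota 0 i)); last first.
  by move=> k; rewrite mem_iota => /andP [_ ->].
rewrite [flatten (_ :: _)]/=.
rewrite (@flat_in _ (fun k => [:: k.+1]) (iota i.+1 (m - i))); last first.
  move=> k; rewrite mem_iota => /andP [H _].
  by rewrite ltnNge (ltnW H) /= gtn_eqF.
rewrite !flat1 map_id iota_succ.
rewrite -[m.+2](@subnKC i); last by lia.
rewrite iotaD /= subSn; last by lia.
by rewrite subSn.
Qed.

Lemma I_s j m : j <= m ->
  flatten [seq (if k <= j then [:: k] else if k == j.+1 then [::] else [:: k.-1])
          | k <- iota 0 m.+2] = iota 0 m.+1.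
Proof.
move=> jm; rewrite (@iota_split j.+1 m.+1) // map_cat flatten_cat [map _ (_ :: _)]/=.
rewrite ltnn eqxx [flatten (_ :: _)]/=.
rewrite (@flat_in _ (fun k => [:: k]) (iota 0 j.+1)); last first.
  by move=> k; rewrite mem_iota add0n => /andP [_ H]; rewrite -ltnS H.
rewrite (@flat_in _ (fun k => [:: k.-1]) (iota j.+2 (m.+1 - j.+1))); last first.
  move=> k; rewrite mem_iota => /andP [H _].
  by rewrite leqNgt (ltnW H) /= gtn_eqF.
rewrite !flat1 map_id /= subSS.
have -> : [seq k.-1 | k <- iota j.+2 (m - j)] = iota j.+1 (m - j).
  by rewrite -iota_succ -map_comp map_id.
congr (_ :: _); rewrite -[in RHS](@subnKC j m) // iotaD; by rewrite add1n.
Qed.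

Lemma I_dl m :
  flatten [seq (if k == 0 then [:: m.+1; 0] else [:: k]) | k <- iota 0 m.+1]
  = m.+1 :: iota 0 m.+1.
Proof.
rewrite [iota 0 m.+1]/= [map _ (_ :: _)]/= [flatten (_ :: _)]/=.
rewrite (@flat_in _ (fun k => [:: k]) (iota 1 m)); last first.
  by move=> k; rewrite mem_iota => /andP [H _]; rewrite gtn_eqF.
by rewrite flat1 map_id.
Qed.

Lemma rev_iota1 m : [seq m.+1 - k | k <- iota 1 m] = rev (iota 1 m).
Proof.
elim: m => // m IH.
rewrite -[in RHS](addn1 m) iotaD rev_cat /= add1n.
rewrite subn1 /=; congr (_ :: _).
rewrite -iota_succ -map_comp -IH; apply: eq_map => k /=. by rewrite subSS.
Qed.

Lemma I_rho m :
  flatten [seq (if k == 0 then [:: 0] else [:: m.+1 - k]) | k <- iota 0 m.+1]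
  = 0 :: rev (iota 1 m).
Proof.
rewrite [iota 0 m.+1]/= [map _ (_ :: _)]/= [flatten (_ :: _)]/=.
rewrite (@flat_in _ (fun k => [:: m.+1 - k]) (iota 1 m)); last first.
  by move=> k; rewrite mem_iota => /andP [H _]; rewrite gtn_eqF.
by rewrite flat1 rev_iota1.
Qed.

Lemma flat_flat (G : nat -> seq nat) (L : nat -> seq nat) s :
  flatten [seq flatten [seq G j | j <- L k] | k <- s] = flatten [seq G j | j <- flatten (map L s)].
Proof. by elim: s => //= x s IH; rewrite map_cat !flatten_cat IH. Qed.

Lemma Fn_gen n p q (g : mor p q) (a : mor n p) c (L : nat -> seq nat) :
  (forall j, lab g j = c) -> (forall k, k <= q -> fib g (inord k) = map inord (L k)) ->
  Fn (mcomp g a) = flatten [seq ac c (nf a j) | j <- flatten (map L (iota 0 q.+1))].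
Proof.
move=> Hl Hf; rewrite /Fn (@flat_in _ (fun k => flatten [seq ac c (nf a j) | j <- L k])).
  by rewrite (flat_flat (fun j => ac c (nf a j))).
move=> k; rewrite mem_iota add0n => /andP [_ H]; apply: nf_comp => //; exact: Hf.
Qed.

Definition Ld i k := if k < i then [:: k] else if k == i then [:: i; i.+1] else [:: k.+1].
Definition Ldl m k := if k == 0 then [:: m.+1; 0] else [:: k].
Definition Ls j k := if k <= j then [:: k] else if k == j.+1 then [::] else [:: k.-1].
Definition Lr m k := if k == 0 then [:: 0] else [:: m.+1 - k].

Lemma fib_d m i k : i <= m -> k <= m -> fib (dmor m i) (inord k) = map inord (Ld i k).
Proof. by move=> im km; rewrite /= ffunE inordK // im. Qed.
Lemma fib_dl m k : k <= m -> fib (dmor m m.+1) (inord k) = map inord (Ldl m k).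
Proof. by move=> km; rewrite /= ffunE inordK // ltnn. Qed.
Lemma fib_s m j k : k <= m.+1 -> fib (smor m j) (inord k) = map inord (Ls j k).
Proof. by move=> km; rewrite /= ffunE inordK. Qed.
Lemma fib_r m k : k <= m -> fib (rhomor m) (inord k) = map inord (Lr m k).
Proof. by move=> km; rewrite /= ffunE inordK. Qed.
Lemma lab_d m i x : lab (dmor m i) x = false. Proof. by rewrite /= ffunE. Qed.
Lemma lab_s m i x : lab (smor m i) x = false. Proof. by rewrite /= ffunE. Qed.
Lemma lab_r m x : lab (rhomor m) x = true. Proof. by rewrite /= ffunE. Qed.

Lemma flat_id n p (a : mor n p) s : flatten [seq ac false (nf a j) | j <- s] = flatten (map (nf a) s).
Proof. by []. Qed.

Lemma Fn_d n m (a : mor n m.+1) i : i <= m -> Fn (mcomp (dmor m i) a) = Fn a.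
Proof.
move=> im; rewrite (@Fn_gen _ _ _ _ _ false (Ld i)); [| exact: lab_d | by move=> k; apply: fib_d].
by rewrite /Ld I_d.
Qed.

Lemma Fn_s n m (a : mor n m) j : j <= m -> Fn (mcomp (smor m j) a) = Fn a.
Proof.
move=> jm; rewrite (@Fn_gen _ _ _ _ _ false (Ls j)); [| exact: lab_s | by move=> k; apply: fib_s].
by rewrite /Ls I_s.
Qed.

Lemma Fn_dl n m (a : mor n m.+1) :
  Fn (mcomp (dmor m m.+1) a) = rot (size (flatten (map (nf a) (iota 0 m.+1)))) (Fn a).
Proof.
rewrite (@Fn_gen _ _ _ _ _ false (Ldl m)); [| exact: lab_d | by move=> k; apply: fib_dl].
have E : iota 0 m.+2 = iota 0 m.+1 ++ [:: m.+1] by rewrite -addn1 iotaD.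
rewrite /Ldl I_dl /Fn E map_cat flatten_cat rot_size_cat /=.
by rewrite cats0.
Qed.

Lemma Fn_r n m (a : mor n m) :
  Fn (mcomp (rhomor m) a) = rev (rot (size (nf a 0)) (Fn a)).
Proof.
rewrite (@Fn_gen _ _ _ _ _ true (Lr m)); [| exact: lab_r | by move=> k; apply: fib_r].
rewrite /Lr I_rho /Fn /= rot_size_cat rev_cat.
congr (_ ++ _); rewrite rev_flatten -map_comp -map_rev. by [].
Qed.

Definition isrot n c (L : seq nat) := exists2 r, r < n.+1 & L = ac c (rot r (iota 0 n.+1)).

Lemma rot_norm (s : seq nat) r : 0 < size s -> exists2 r', r' < size s & rot r s = rot r' s.
Proof.
move=> s0; case: (ltnP r (size s)) => H; first by exists r.
by exists 0 => //; rewrite rot_oversize // rot0.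
Qed.

Lemma rotrot (s : seq nat) r k : r < size s -> exists2 r', r' < size s & rot k (rot r s) = rot r' s.
Proof.
move=> rs; case: (leqP (size s) k) => Hk.
  by exists r => //; rewrite rot_oversize // size_rot.
rewrite rot_add_mod; [apply: rot_norm; lia | exact: ltnW rs | exact: ltnW Hk].
Qed.

Lemma isrot_rot n c L k : isrot n c L -> isrot n c (rot k L).
Proof.
case=> r rn ->; have rs : r < size (iota 0 n.+1) by rewrite size_iota.
case: c => /=.
  rewrite -rev_rotr /rotr size_rot.
  have [r' H1 ->] := @rotrot (iota 0 n.+1) r (size (iota 0 n.+1) - k) rs.
  by exists r'; rewrite ?size_iota in H1.
have [r' H1 ->] := @rotrot (iota 0 n.+1) r k rs.
by exists r'; rewrite ?size_iota in H1.
Qed.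

Lemma isrot_rev n c L k : isrot n c L -> isrot n (~~ c) (rev (rot k L)).
Proof.
case=> r rn ->; have rs : r < size (iota 0 n.+1) by rewrite size_iota.
case: c => /=.
  rewrite -rev_rotr revK /rotr size_rot.
  have [r' H1 ->] := @rotrot (iota 0 n.+1) r (size (iota 0 n.+1) - k) rs.
  by exists r'; rewrite ?size_iota in H1.
have [r' H1 ->] := @rotrot (iota 0 n.+1) r k rs.
by exists r'; rewrite ?size_iota in H1.
Qed.

Lemma nf_id n k : k <= n -> nf (idm n) k = [:: k].
Proof. by move=> kn; rewrite /nf /= ffunE /= inordK. Qed.

Lemma Fn_id n : Fn (idm n) = iota 0 n.+1.
Proof.
rewrite /Fn (@flat_in _ (fun k => [:: k])); first by rewrite flat1 map_id.
by move=> k; rewrite mem_iota add0n => /andP [_ H]; apply: nf_id.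
Qed.

Lemma R_shape n m (a : mor n m) : inR a ->
  exists c, (forall x, lab a x = c) /\ isrot n c (Fn a).
Proof.
elim=> {n m a}.
- move=> n; exists false; split; first by move=> x; rewrite /= ffunE.
  by exists 0 => //; rewrite Fn_id rot0.
- move=> n m a i im _ [c [Hl Hr]]; exists c; split.
    by move=> x; rewrite /= !ffunE Hl addbF.
  case: (leqP i m) => H; first by rewrite Fn_d.
  have -> : i = m.+1 by lia.
  rewrite Fn_dl; exact: isrot_rot.
- move=> n m a j jm _ [c [Hl Hr]]; exists c; split.
    by move=> x; rewrite /= !ffunE Hl addbF.
  by rewrite Fn_s.
- move=> n m a _ [c [Hl Hr]]; exists (~~ c); split.
    by move=> x; rewrite /= !ffunE Hl addbT.
  rewrite Fn_r; exact: isrot_rev.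
Qed.

Lemma idx_rot n r : r < n.+1 ->
  index 0 (rot r (iota 0 n.+1)) = if r == 0 then 0 else n.+1 - r.
Proof.
case: r => [|r] H; first by rewrite rot0.
rewrite /rot drop_iota take_iota index_cat mem_iota /=.
have -> : minn r.+1 n.+1 = r.+1 by lia.
by rewrite size_iota /= addn0.
Qed.

Lemma index_rev_uniq (T : eqType) (s : seq T) x : uniq s -> x \in s ->
  index x (rev s) = size s - (index x s).+1.
Proof.
move=> us xs; have ilt : index x s < size s by rewrite index_mem.
have jl : size s - (index x s).+1 < size s by lia.
have E := nth_rev x jl.
rewrite (_ : size s - (size s - (index x s).+1).+1 = index x s) in E; last by lia.
rewrite nth_index // in E.
by rewrite -{1}E index_uniq ?rev_uniq // size_rev.
Qed.

Lemma rot_uniq_iota n r : uniq (rot r (iota 0 n.+1)).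
Proof. by rewrite rot_uniq iota_uniq. Qed.
Lemma rot_mem0 n r : 0 \in rot r (iota 0 n.+1).
Proof. by rewrite mem_rot mem_iota. Qed.

Lemma ix_inj n c r r' : r < n.+1 -> r' < n.+1 ->
  index 0 (ac c (rot r (iota 0 n.+1))) = index 0 (ac c (rot r' (iota 0 n.+1))) -> r = r'.
Proof.
move=> rn rn'; case: c; rewrite /ac.
  rewrite !index_rev_uniq ?rot_uniq_iota ?rot_mem0 // !size_rot size_iota.
  have := @index_mem _ 0 (rot r (iota 0 n.+1)); rewrite rot_mem0 size_rot size_iota.
  have := @index_mem _ 0 (rot r' (iota 0 n.+1)); rewrite rot_mem0 size_rot size_iota.
  rewrite !idx_rot //; do 2 case: eqP => ?; lia.
rewrite !idx_rot //; do 2 case: eqP => ?; lia.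
Qed.

Definition rs0 n q := if q == 0 then 0 else n.+1 - q.
Definition rsol n c p := rs0 n (if c then n - p else p).

Lemma rs0_lt n q : rs0 n q < n.+1.
Proof. rewrite /rs0; case: eqP => ?; lia. Qed.

Lemma rsol_lt n c p : rsol n c p < n.+1.
Proof. exact: rs0_lt. Qed.

Lemma idx_rs0 n q : q < n.+1 -> index 0 (rot (rs0 n q) (iota 0 n.+1)) = q.
Proof.
move=> qn; rewrite idx_rot ?rs0_lt // /rs0.
case: (q =P 0) => [->|H] //; rewrite ifF; first lia.
apply/eqP; lia.
Qed.

Lemma rsol_ix n c p : p < n.+1 -> index 0 (ac c (rot (rsol n c p) (iota 0 n.+1))) = p.
Proof.
move=> pn; rewrite /rsol; case: c; rewrite /ac.
  rewrite index_rev_uniq ?rot_uniq_iota ?rot_mem0 // size_rot size_iota idx_rs0; lia.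
by rewrite idx_rs0.
Qed.

Lemma fib_cs n m (a : mor n m) (h : mor n n) tau i :
  (forall j, fib h j = [:: tau j]) -> fib (mcomp a h) i = map tau (fib a i).
Proof.
move=> H; rewrite /= ffunE; transitivity (flatten [seq [:: tau j] | j <- fib a i]); last exact: flatten_map1.
congr flatten; apply: eq_map => j.
by rewrite H /actseq; case: (lab a j).
Qed.

Lemma Fo_cs n m (a : mor n m) (h : mor n n) tau :
  (forall j, fib h j = [:: tau j]) -> Fo (mcomp a h) = map tau (Fo a).
Proof.
move=> H; rewrite /Fo (map_flatten tau [seq fib a i | i <- enum 'I_m.+1]) -(map_comp (map tau) (fib a)).
congr flatten; apply: eq_map => i /=.
exact: fib_cs.
Qed.

Lemma lab_cs n m (a : mor n m) (h : mor n n) c k :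
  (forall x, lab a x = c) -> lab (mcomp a h) k = lab h k (+) c.
Proof. by move=> H; rewrite /= ffunE H. Qed.

Lemma sumn_ge (s : seq nat) : (forall x, x \in s -> 0 < x) -> size s <= sumn s.
Proof.
elim: s => //= y s IH H; have := H y (mem_head _ _).
have Hs : forall x, x \in s -> 0 < x by move=> z zs; apply: H; rewrite inE zs orbT.
have := IH Hs; lia.
Qed.

Lemma sumn_ones (s : seq nat) : (forall x, x \in s -> 0 < x) -> sumn s = size s ->
  forall x, x \in s -> x = 1.
Proof.
elim: s => //= y s IH H E x.
have Hs : forall x, x \in s -> 0 < x by move=> z zs; apply: H; rewrite inE zs orbT.
rewrite inE => /orP [/eqP ->|xs].
  have := H y (mem_head _ _); have := sumn_ge Hs; lia.
apply: IH xs => //.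
have := H y (mem_head _ _); have := sumn_ge Hs; lia.
Qed.

Lemma actseq1 n c (s : seq 'I_n.+1) x : actseq c s = [:: x] -> s = [:: x].
Proof. by case: c => //= E; rewrite -(revK s) E. Qed.

Lemma hplus_str n (h : mor n n) : inHplus h ->
  exists tau : 'I_n.+1 -> 'I_n.+1,
    [/\ injective tau, tau ord0 = ord0, lab h ord0 = false & forall j, fib h j = [:: tau j]].
Proof.
case=> [[vh [h' [vh' [e1 e2]]]] [h0 l0]].
have E1 i : flatten [seq actseq (lab h j) (fib h' j) | j <- fib h i] = [:: i].
  by have := congr1 (fun g => fib g i) e1; rewrite /= !ffunE.
have ne i : 0 < size (fib h i).
  by have := E1 i; case: (fib h i).
have sz : sumn (map size [seq fib h i | i <- enum 'I_n.+1]) = n.+1.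
  by rewrite -size_flatten (perm_size vh) size_enum_ord.
have one j : size (fib h j) = 1.
  apply: (sumn_ones (s := map size [seq fib h i | i <- enum 'I_n.+1])).
  - by move=> x /mapP [s /mapP [i _ ->] ->].
  - by rewrite -size_flatten (perm_size vh) !size_map.
  - by apply: map_f; apply: map_f; rewrite mem_enum.
have fe j : fib h j = [:: head ord0 (fib h j)].
  by have := one j; case: (fib h j) => [|x [|y s]].
exists (fun j => head ord0 (fib h j)); split => //.
- move=> x y Exy.
  have Hx := E1 x; rewrite fe /= cats0 in Hx; move/actseq1: Hx => Hx.
  have Hy := E1 y; rewrite fe /= cats0 in Hy; move/actseq1: Hy => Hy.
  by move: Hx; rewrite Exy Hy => -[].
- by move: h0; rewrite fe inE => /eqP <-.
Qed.

Ltac iff_ := rewrite ifF; last (apply/negbTE/negP; lia).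
Ltac ift_ := rewrite ifT; last lia.

Definition noemp n m (a : mor n m) := forall j, j <= m -> 0 < size (nf a j).
Definition labF n m (a : mor n m) := forall x, lab a x = false.

Lemma nf_dm n m (a : mor n m.+1) i j : i <= m -> j <= m ->
  nf (mcomp (dmor m i) a) j = flatten [seq nf a x | x <- Ld i j].
Proof.
move=> im jm; rewrite (@nf_comp _ _ _ _ _ false (Ld i j)) //.
- by move=> y; rewrite lab_d.
- exact: fib_d.
Qed.

Lemma nf_dlm n m (a : mor n m.+1) j : j <= m ->
  nf (mcomp (dmor m m.+1) a) j = flatten [seq nf a x | x <- Ldl m j].
Proof.
move=> jm; rewrite (@nf_comp _ _ _ _ _ false (Ldl m j)) //.
- by move=> y; rewrite lab_d.
- exact: fib_dl.
Qed.

Lemma nf_sm n m (a : mor n m) i j : j <= m.+1 ->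
  nf (mcomp (smor m i) a) j = flatten [seq nf a x | x <- Ls i j].
Proof.
move=> jm; rewrite (@nf_comp _ _ _ _ _ false (Ls i j)) //.
- by move=> y; rewrite lab_s.
- exact: fib_s.
Qed.

Lemma nf_rm n m (a : mor n m) j : j <= m ->
  nf (mcomp (rhomor m) a) j = flatten [seq rev (nf a x) | x <- Lr m j].
Proof.
move=> jm; rewrite (@nf_comp _ _ _ _ _ true (Lr m j)) //.
- by move=> y; rewrite lab_r.
- exact: fib_r.
Qed.

Definition IHm n m := forall a' : mor n m.+1,
  labF a' -> isrot n false (Fn a') -> 0 \in nf a' 0 -> noemp a' -> inR a'.

Lemma SPLd n m (a : mor n m) k P Q :
  labF a -> isrot n false (Fn a) -> noemp a ->
  k <= m -> nf a k = P ++ Q -> 0 < size P -> 0 < size Q -> (k = 0 -> 0 \in P) ->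
  IHm n m -> 0 \in nf a 0 -> inR a.
Proof.
move=> Hl Hr Hne km Hk sP sQ H0 IHa Hz.
pose G j := if j < k then nf a j else if j == k then P else if j == k.+1 then Q else nf a j.-1.
have Gb j x : x \in G j -> x <= n.
  rewrite /G; case: ifP => _; first exact: nf_lt.
  case: ifP => _; first by move=> xP; apply: (@nf_lt _ _ a k); rewrite Hk mem_cat xP.
  case: ifP => _; first by move=> xQ; apply: (@nf_lt _ _ a k); rewrite Hk mem_cat xQ orbT.
  exact: nf_lt.
pose a' : mor n m.+1 := mkmor n m.+1 G false.
have nfa' j : j <= m.+1 -> nf a' j = G j by move=> jm; apply: nf_mkmor => // x; exact: Gb.
have Ea : a = mcomp (dmor m k) a'.
  apply: mor_eqnf => [j jm|x]; last by rewrite /= !ffunE Hl.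
  rewrite nf_dm // /Ld.
  case: (ltnP j k) => H1.
    by rewrite /= cats0 nfa' /G ?H1 //; lia.
  case: (boolP (j == k)) => [/eqP H2|H2].
    subst j; rewrite /= cats0 !nfa' // /G; last lia. rewrite ltnn eqxx Hk; iff_; iff_; ift_; by [].
  rewrite /= cats0 nfa' /G; last lia.
  by iff_; iff_; iff_.
have Fa : Fn a' = Fn a by rewrite Ea Fn_d.
rewrite Ea; apply: inR_d; first lia.
apply: IHa.
- by move=> x; rewrite lab_mkmor.
- by rewrite Fa.
- rewrite nfa' // /G; case: (posnP k) => [k0|kp].
    by rewrite k0 /=; apply: H0.
  by rewrite ?kp.
- move=> j jm; rewrite nfa' // /G.
  case: ifP => H; first by apply: Hne; move/idP: H; lia.
  case: ifP => _; first by [].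
  case: ifP => _; first by [].
  apply: Hne; lia.
Qed.

Lemma SPLl n m (a : mor n m) P :
  labF a -> isrot n false (Fn a) -> noemp a -> nf a 0 = P ++ [:: 0] -> 0 < size P ->
  IHm n m -> inR a.
Proof.
move=> Hl Hr Hne Hk sP IHa.
pose G j := if j == 0 then [:: 0] else if j == m.+1 then P else nf a j.
have Gb j x : x \in G j -> x <= n.
  rewrite /G; case: ifP => _; first by rewrite inE => /eqP ->.
  case: ifP => _; first by move=> xP; apply: (@nf_lt _ _ a 0); rewrite Hk mem_cat xP.
  exact: nf_lt.
pose a' : mor n m.+1 := mkmor n m.+1 G false.
have nfa' j : j <= m.+1 -> nf a' j = G j by move=> jm; apply: nf_mkmor => // x; exact: Gb.
have Ea : a = mcomp (dmor m m.+1) a'.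
  apply: mor_eqnf => [j jm|x]; last by rewrite /= !ffunE Hl.
  rewrite nf_dlm // /Ldl.
  case: (posnP j) => [->|jp] /=.
    by rewrite cats0 !nfa' // /G /= eqxx Hk.
  rewrite cats0 nfa' /G; last lia.
  by iff_; iff_.
have Fa : Fn a' = rotr (size (flatten (map (nf a') (iota 0 m.+1)))) (Fn a).
  by rewrite Ea Fn_dl rotK.
rewrite Ea; apply: inR_d => //.
apply: IHa.
- by move=> x; rewrite lab_mkmor.
- by rewrite Fa /rotr; apply: isrot_rot.
- by rewrite nfa' // /G eqxx inE.
- move=> j jm; rewrite nfa' // /G.
  case: ifP => H; first by [].
  case: ifP => H'; first by [].
  apply: Hne; move/negbT: H'; move/negbT: H; lia.
Qed.

Lemma mem_take_index (s : seq nat) x : x \in s -> x \in take (index x s).+1 s.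
Proof.
move=> xs; rewrite (take_nth x); last by rewrite index_mem.
by rewrite mem_rcons inE nth_index // eqxx.
Qed.

Lemma SPL n m (a : mor n m) k :
  labF a -> isrot n false (Fn a) -> noemp a -> 0 \in nf a 0 ->
  k <= m -> 1 < size (nf a k) -> IHm n m -> inR a.
Proof.
move=> Hl Hr Hne Hz km Hk IHa.
case: (posnP k) => [k0|kp].
  subst k; set l := nf a 0 in Hz Hk *.
  have il : index 0 l < size l by rewrite index_mem.
  case: (ltnP (index 0 l).+1 (size l)) => H.
    apply: (@SPLd _ _ a 0 (take (index 0 l).+1 l) (drop (index 0 l).+1 l)) => //.
    + by rewrite cat_take_drop.
    + by rewrite size_take H.
    + by rewrite size_drop; lia.
    + by move=> _; apply: mem_take_index.
  apply: (@SPLl _ _ a (take (index 0 l) l)) => //.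
    transitivity (take (index 0 l) l ++ drop (index 0 l) l); first by rewrite cat_take_drop.
    congr (_ ++ _).
    rewrite (drop_nth 0) // nth_index // drop_oversize //; lia.
  rewrite size_take il; case: (posnP (index 0 l)) => // H0.
  lia.
apply: (@SPLd _ _ a k (take 1 (nf a k)) (drop 1 (nf a k))) => //.
- by rewrite cat_take_drop.
- by rewrite size_take Hk.
- by rewrite size_drop; lia.
- by move=> E; rewrite E in kp.
Qed.

Lemma nth_rot0 n r : r < n.+1 -> nth 0 (rot r (iota 0 n.+1)) 0 = r.
Proof.
move=> rn; rewrite /rot nth_cat size_drop size_iota ifT; last lia.
by rewrite nth_drop nth_iota; lia.
Qed.

Lemma Lid n (a : mor n n) : labF a -> isrot n false (Fn a) -> 0 \in nf a 0 ->
  (forall j, j <= n -> size (nf a j) = 1) -> inR a.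
Proof.
move=> Hl [r rn Hr] Hz H1.
pose x j := head 0 (nf a j).
have ex j : j <= n -> nf a j = [:: x j].
  by move=> jn; have := H1 j jn; rewrite /x; case: (nf a j) => [|y [|z s]].
have FE : Fn a = map x (iota 0 n.+1).
  rewrite /Fn (@flat_in _ (fun j => [:: x j])) ?flat1 //.
  by move=> j; rewrite mem_iota add0n => /andP [_ H]; apply: ex.
have x0 : x 0 = 0 by move: Hz; rewrite ex // inE => /eqP.
have r0 : r = 0.
  have := congr1 (nth 0 ^~ 0) Hr; rewrite /= nth_rot0 // FE (nth_map 0) ?size_iota //.
  by rewrite nth_iota // x0 => <-.
move: Hr; rewrite r0 rot0 FE => Hr.
have xj j : j <= n -> x j = j.
  move=> jn; have := congr1 (fun s => nth 0 s j) Hr; rewrite /ac (nth_map 0) ?size_iota // nth_iota // add0n.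
have -> : a = idm n; last exact: inR_id.
apply: mor_eqnf => [j jn|y]; last by rewrite Hl /= ffunE.
by rewrite nf_id // ex // xj.
Qed.

Lemma sumn_gt (s : seq nat) y : (forall x, x \in s -> 0 < x) -> y \in s -> 1 < y ->
  (size s).+1 <= sumn s.
Proof.
elim: s => //= z s IH H.
have Hs : forall x, x \in s -> 0 < x by move=> w ws; apply: H; rewrite inE ws orbT.
have := H z (mem_head _ _); rewrite inE => hz /orP [/eqP <- y1|ys y1].
  have := sumn_ge Hs; lia.
have := IH Hs ys y1; lia.
Qed.

Lemma size_Fn n m (a : mor n m) : size (Fn a) = sumn [seq size (nf a k) | k <- iota 0 m.+1].
Proof. by rewrite /Fn size_flatten /shape -map_comp. Qed.

Lemma size_isrot n c L : isrot n c L -> size L = n.+1.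
Proof. by case=> r _ ->; case: c; rewrite /ac ?size_rev size_rot size_iota. Qed.

Lemma sumn_le1 (s : seq nat) : (forall x, x \in s -> x <= 1) -> sumn s <= size s.
Proof.
elim: s => //= z s IH H.
have Hs : forall x, x \in s -> x <= 1 by move=> w ws; apply: H; rewrite inE ws orbT.
have := H z (mem_head _ _); have := IH Hs; lia.
Qed.

Lemma pos_sizes n m (a : mor n m) : noemp a ->
  forall x, x \in [seq size (nf a k) | k <- iota 0 m.+1] -> 0 < x.
Proof. by move=> Hne x /mapP [k]; rewrite mem_iota add0n => /andP [_ km] ->; apply: Hne. Qed.

Lemma Pnobig n m (a : mor n m) : labF a -> isrot n false (Fn a) -> 0 \in nf a 0 -> noemp a ->
  (forall j, j <= m -> size (nf a j) <= 1) -> inR a.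
Proof.
move=> Hl Hr Hz Hne H1.
have S := size_Fn a; rewrite (size_isrot Hr) in S.
have le : sumn [seq size (nf a k) | k <- iota 0 m.+1] <= m.+1.
  rewrite -{2}(size_iota 0 m.+1) -(size_map (fun k => size (nf a k))).
  by apply: sumn_le1 => x /mapP [k]; rewrite mem_iota add0n => /andP [_ km] ->; apply: H1.
have ge := sumn_ge (pos_sizes Hne); rewrite size_map size_iota in ge.
have E : m = n by lia.
subst m; apply: Lid => // j jn; have := H1 j jn; have := Hne j jn; lia.
Qed.

Lemma Pbig_lt n m (a : mor n m) k : isrot n false (Fn a) -> noemp a -> k <= m ->
  1 < size (nf a k) -> m < n.
Proof.
move=> Hr Hne km k1.
have S := size_Fn a; rewrite (size_isrot Hr) in S.
have kin : size (nf a k) \in [seq size (nf a k) | k <- iota 0 m.+1].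
  by apply/mapP; exists k => //; rewrite mem_iota add0n ltnS km.
have := sumn_gt (pos_sizes Hne) kin k1; rewrite size_map size_iota -S; lia.
Qed.

Lemma P1 d n m (a : mor n m) : n - m <= d ->
  labF a -> isrot n false (Fn a) -> 0 \in nf a 0 -> noemp a -> inR a.
Proof.
elim: d m a => [|d IH] m a Hd Hl Hr Hz Hne.
  case: (boolP (has (fun k => 1 < size (nf a k)) (iota 0 m.+1))) => Hh.
    case/hasP: Hh => k; rewrite mem_iota add0n ltnS => /andP [_ km] k1.
    have := Pbig_lt Hr Hne km k1; lia.
  apply: Pnobig => // j jm; move/hasPn: Hh => /(_ j).
  by move=> H; rewrite leqNgt; apply: H; rewrite mem_iota add0n ltnS jm.
case: (boolP (has (fun k => 1 < size (nf a k)) (iota 0 m.+1))) => Hh.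
  case/hasP: Hh => k; rewrite mem_iota add0n ltnS => /andP [_ km] k1.
  have mn := Pbig_lt Hr Hne km k1.
  apply: (SPL Hl Hr Hne Hz km k1) => a' Hl' Hr' Hz' Hne'.
  apply: (IH m.+1) => //; lia.
apply: Pnobig => // j jm; move/hasPn: Hh => /(_ j).
by move=> H; rewrite leqNgt; apply: H; rewrite mem_iota add0n ltnS jm.
Qed.

Lemma P2 n m : forall a : mor n m, labF a -> isrot n false (Fn a) -> 0 \in nf a 0 -> inR a.
Proof.
elim: m => [|m IH] a Hl Hr Hz.
  apply: (@P1 (n - 0)) => // j; rewrite leqn0 => /eqP ->.
  by case: (nf a 0) Hz.
case: (boolP (has (fun k => nilp (nf a k)) (iota 1 m.+1))) => Hh; last first.
  apply: (@P1 (n - m.+1)) => // j jm; case: (posnP j) => [->|jp].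
    by case: (nf a 0) Hz.
  move/hasPn: Hh => /(_ j); rewrite mem_iota jp add1n ltnS jm => /(_ isT).
  by case: (nf a j).
case/hasP: Hh => k; rewrite mem_iota add1n ltnS => /andP [k1 km] /nilP Hk.
pose G j := if j < k then nf a j else nf a j.+1.
have Gb j x : x \in G j -> x <= n by rewrite /G; case: ifP => _; exact: nf_lt.
pose a' : mor n m := mkmor n m G false.
have nfa' j : j <= m -> nf a' j = G j by move=> jm; apply: nf_mkmor => // x; exact: Gb.
have Ea : a = mcomp (smor m k.-1) a'.
  apply: mor_eqnf => [j jm|x]; last by rewrite /= !ffunE Hl.
  rewrite nf_sm // /Ls.
  case: (leqP j k.-1) => H1.
    by rewrite /= cats0 nfa' /G; [ift_ | lia].
  case: (boolP (j == k.-1.+1)) => [/eqP H2|H2].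
    by rewrite /= H2 prednK.
  rewrite /= cats0 nfa' /G; last lia.
  iff_; congr nf; lia.
have Fa : Fn a' = Fn a by rewrite Ea Fn_s //; lia.
rewrite Ea; apply: inR_s; first lia.
apply: IH.
- by move=> x; rewrite lab_mkmor.
- by rewrite Fa.
- by rewrite nfa' // /G k1.
Qed.

Lemma P3 n m (a : mor n m) : (forall x, lab a x = true) -> isrot n true (Fn a) ->
  0 \in nf a 0 -> inR a.
Proof.
move=> Hl Hr Hz.
pose G j := if j == 0 then rev (nf a 0) else rev (nf a (m.+1 - j)).
have Gb j x : x \in G j -> x <= n by rewrite /G; case: ifP => _; rewrite mem_rev; exact: nf_lt.
pose a' : mor n m := mkmor n m G false.
have nfa' j : j <= m -> nf a' j = G j by move=> jm; apply: nf_mkmor => // x; exact: Gb.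
have Ea : a = mcomp (rhomor m) a'.
  apply: mor_eqnf => [j jm|x]; last by rewrite /= !ffunE Hl.
  rewrite nf_rm // /Lr.
  case: (posnP j) => [->|jp] /=.
    by rewrite cats0 nfa' // /G eqxx revK.
  rewrite cats0 nfa' /G; last lia.
  iff_; rewrite revK; congr nf; lia.
have Fa : Fn a' = rotr (size (nf a' 0)) (rev (Fn a)) by rewrite Ea Fn_r revK rotK.
rewrite Ea; apply: inR_rho; apply: P2.
- by move=> x; rewrite lab_mkmor.
- rewrite Fa /rotr; apply: isrot_rot.
  case: Hr => r rn ->; exists r => //; by rewrite /ac revK.
- by rewrite nfa' // /G eqxx mem_rev.
Qed.

Lemma shape_R n m (a : mor n m) c : (forall x, lab a x = c) -> isrot n c (Fn a) ->
  0 \in nf a 0 -> inR a.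
Proof. by case: c; [apply: P3 | apply: P2]. Qed.

Lemma fmap_single n (g : mor n n) phi psi k :
  (forall j, fib g j = [:: phi j]) -> cancel psi phi -> cancel phi psi -> fmap g k = psi k.
Proof.
move=> Hg c1 c2; rewrite /fmap; case: pickP => [i|H] /=.
  by rewrite Hg inE => /eqP ->; rewrite c2.
by have := H (psi k); rewrite Hg c1 inE eqxx.
Qed.

Lemma valid_single n (g : mor n n) phi psi :
  (forall j, fib g j = [:: phi j]) -> cancel psi phi -> cancel phi psi -> valid g.
Proof.
move=> Hg c1 c2; rewrite /valid.
have -> : [seq fib g i | i <- enum 'I_n.+1] = [seq [:: phi i] | i <- enum 'I_n.+1].
  by apply: eq_map => i; rewrite Hg.
rewrite flatten_map1; apply: uniq_perm.
- by rewrite (map_inj_uniq (can_inj c2)) enum_uniq.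
- exact: enum_uniq.
- move=> x; rewrite mem_enum; apply/mapP; exists (psi x); by rewrite ?mem_enum ?c1.
Qed.

Lemma mem_acrot n c r x : x < n.+1 -> x \in ac c (rot r (iota 0 n.+1)).
Proof. by move=> xn; case: c; rewrite /ac ?mem_rev mem_rot mem_iota. Qed.

Lemma decomp_exists n m (f : mor n m) : inIGamma f ->
  exists a h, inR a /\ inHplus h /\ f = mcomp a h.
Proof.
case=> vf f0.
set L := Fo f.
have Lu : uniq L by rewrite (perm_uniq vf) enum_uniq.
have Ls : size L = n.+1 by rewrite (perm_size vf) size_enum_ord.
have Lm : forall x, x \in L by move=> x; rewrite (perm_mem vf) mem_enum.
set c := lab f ord0.
set p := index ord0 L.
have pn : p < n.+1 by rewrite -Ls index_mem.
set r := rsol n c p.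
set Z := ac c (rot r (iota 0 n.+1)).
set Y : seq 'I_n.+1 := map inord Z.
have YZ : map val Y = Z.
  rewrite -map_comp map_id_in // => x xZ /=; rewrite inordK //; move: xZ.
  by rewrite /Z; case: (c); rewrite /ac ?mem_rev mem_rot mem_iota => /andP [_ H]; lia.
have Zu : uniq Z by rewrite /Z; case: (c); rewrite /ac ?rev_uniq rot_uniq iota_uniq.
have Yu : uniq Y by rewrite -(map_inj_uniq val_inj) YZ.
have Ys : size Y = n.+1 by rewrite /Y size_map /Z; case: (c); rewrite /ac ?size_rev size_rot size_iota.
have Ym : forall x, x \in Y.
  by move=> x; rewrite -(mem_map val_inj) YZ /Z; apply: mem_acrot; exact: ltn_ord.
have Yp : index ord0 Y = p.
  by rewrite -(index_map val_inj) YZ /= /Z rsol_ix.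
pose tau x := nth ord0 L (index x Y).
pose sig x := nth ord0 Y (index x L).
have st : cancel tau sig.
  move=> x; rewrite /sig /tau index_uniq //; last by rewrite Ls; have := index_mem x Y; rewrite Ym Ys.
  by rewrite nth_index.
have ts : cancel sig tau.
  move=> x; rewrite /sig /tau index_uniq //; last by rewrite Ys; have := index_mem x L; rewrite Lm Ls.
  by rewrite nth_index.
have t0 : tau ord0 = ord0 by rewrite /tau Yp nth_index.
have s0 : sig ord0 = ord0 by rewrite /sig -/p -Yp nth_index.
have LY : L = map tau Y.
  apply: (@eq_from_nth _ ord0); first by rewrite size_map Ls Ys.
  move=> i iL; rewrite (nth_map ord0); last by rewrite Ys -Ls.
  by rewrite /tau index_uniq // Ys -Ls.
pose h : mor n n := Mor [ffun j => [:: tau j]] [ffun k => lab f k (+) c].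
pose h' : mor n n := Mor [ffun j => [:: sig j]] [ffun k => lab h (tau k)].
pose a : mor n m := Mor [ffun i => map sig (fib f i)] [ffun _ => c].
have fh : forall j, fib h j = [:: tau j] by move=> j; rewrite /= ffunE.
have fh' : forall j, fib h' j = [:: sig j] by move=> j; rewrite /= ffunE.
exists a, h; split; last split.
- apply: (@shape_R _ _ _ c).
  + by move=> x; rewrite /= ffunE.
  + rewrite Fn_Fo /Fo.
    have -> : [seq fib a i | i <- enum 'I_m.+1] = [seq map sig (fib f i) | i <- enum 'I_m.+1].
      by apply: eq_map => i; rewrite /= ffunE.
    have -> : flatten [seq map sig (fib f i) | i <- enum 'I_m.+1] = map sig L by rewrite /L /Fo map_flatten -(map_comp (map sig) (fib f)).
    rewrite LY mapK // YZ.
    by exists r => //; apply: rsol_lt.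
  + rewrite /nf /= ffunE; apply/mapP; exists ord0 => //.
    apply/mapP; exists ord0 => //.
    have -> : (inord 0 : 'I_m.+1) = ord0 by apply: val_inj; rewrite /= inordK.
    exact: f0.
- split; last first.
    split; first by rewrite fh inE t0.
    by rewrite /= ffunE addbb.
  split; first exact: valid_single fh ts st.
  exists h'; split; first exact: valid_single fh' st ts.
  split; apply: mor_ext.
  + apply/ffunP => i; rewrite (@fib_cs n n h h' sig i fh') fh /= ffunE.
    by rewrite st.
  + apply/ffunP => k; rewrite /= !ffunE (fmap_single k fh' st ts).
    by rewrite addbb.
  + apply/ffunP => i; rewrite (@fib_cs n n h' h tau i fh) fh' /= ffunE ts.
    by [].
  + apply/ffunP => k; rewrite /= !ffunE (fmap_single k fh ts st) ts.
    by rewrite addbb.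
- apply: mor_ext.
  + apply/ffunP => i; rewrite (@fib_cs n m a h tau i fh) /= ffunE mapK //.
  + apply/ffunP => k; rewrite (@lab_cs _ _ a h c k); last by move=> x; rewrite /= ffunE.
    by rewrite /= ffunE addbK.
Qed.

Lemma dec_uniq n m (a1 a2 : mor n m) (h1 h2 : mor n n) :
  inR a1 -> inR a2 -> inHplus h1 -> inHplus h2 -> mcomp a1 h1 = mcomp a2 h2 ->
  a1 = a2 /\ h1 = h2.
Proof.
move=> R1 R2 H1 H2 E.
have [t1 [it1 t10 l10 fh1]] := hplus_str H1.
have [t2 [it2 t20 l20 fh2]] := hplus_str H2.
have [c1 [Hl1 [r1 r1n Hr1]]] := R_shape R1.
have [c2 [Hl2 [r2 r2n Hr2]]] := R_shape R2.
have labE k : lab h1 k (+) c1 = lab h2 k (+) c2.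
  by rewrite -(lab_cs h1 k Hl1) -(lab_cs h2 k Hl2) E.
have c12 : c1 = c2 by have := labE ord0; rewrite l10 l20.
subst c2.
have FE : map t1 (Fo a1) = map t2 (Fo a2) by rewrite -(Fo_cs a1 fh1) -(Fo_cs a2 fh2) E.
have IX : index ord0 (Fo a1) = index ord0 (Fo a2).
  by rewrite -(index_map it1) t10 FE -{1}t20 (index_map it2).
have IXn : index 0 (map val (Fo a1)) = index 0 (map val (Fo a2)).
  by move: IX; rewrite -(index_map val_inj (Fo a1) ord0) -(index_map val_inj (Fo a2) ord0) => H; exact: H.
rewrite -!Fn_Fo Hr1 Hr2 in IXn.
have r12 := ix_inj r1n r2n IXn.
subst r2.
have XE : Fo a1 = Fo a2 by apply: (inj_map val_inj); rewrite -!Fn_Fo Hr1 Hr2.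
have tt : forall x, t1 x = t2 x.
  move=> x; move: FE; rewrite -XE => /eq_in_map; apply.
  by rewrite -(mem_map val_inj) -Fn_Fo Hr1; apply: mem_acrot; exact: ltn_ord.
split.
  apply: mor_ext; apply/ffunP => i.
    apply: (inj_map it1).
    rewrite -(@fib_cs _ _ a1 h1 t1 i fh1) E (@fib_cs _ _ a2 h2 t2 i fh2); apply: eq_map => x; by rewrite tt.
  by rewrite Hl1 Hl2.
apply: mor_ext; apply/ffunP => k.
  by rewrite fh1 fh2 tt.
by have := labE k; move/(congr1 (addb ^~ c1)); rewrite !addbK.
Qed.

Theorem mainTheorem5 (n m : nat) (f : mor n m) :
  inIGamma f ->
  exists! ah : mor n m * mor n n,
    inR ah.1 /\ inHplus ah.2 /\ f = mcomp ah.1 ah.2.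
Proof.
move=> Hf; have [a [h [Ra [Hh Ef]]]] := decomp_exists Hf.
exists (a, h); split => //= -[a2 h2] /= [Ra2 [Hh2 E2]].
have [-> ->] := dec_uniq Ra Ra2 Hh Hh2 (etrans (esym Ef) E2).
by [].
Qed.
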